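(* Let $n\ge2$ and consider Gram blocks of a fully symmetric solution: $P_1,\dots,P_n\in\mathbb{R}^{d\times p}$ with $P_i^TP_i=G^A$ for all $i$ and $P_i^TP_j=G^C$ for all $i\ne j$, and let $G^T=\frac1n(G^A+(n-1)G^C)$, $G^D=G^A-G^T$. Let $\xi_{g^*},\xi_{x^*}\in\mathbb{R}^p$ and $g_i^*=P_i\xi_{g^*}$, $x_i^*=P_i\xi_{x^*}$ ($g_i^*$ representing $\nabla f_i(x_i^* )$). Then the optimality constraints $\frac1n\sum_{i=1}^ng_i^*=0$ and $x_i^*=x_j^*$ for all $i,j$ are equivalent to $\xi_{g^*}^TG^T\xi_{g^*}=0$ and $\xi_{x^*}^TG^D\xi_{x^*}=0$.
   Context: This arises in performance estimation problems for distributed optimization of $\frac1n\sum_if_i(x)$ where each agent holds a copy $x_i^*$ of the minimizer $x^*$ and the gradient of its local function there; the system-level stationarity condition is $\frac1n\sum_i\nabla f_i(x^* )=0$. *)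

(* Defs.v *)
From HB Require Import structures.
From mathcomp Require Import all_boot all_order all_algebra.
Set Implicit Arguments. Unset Strict Implicit. Unset Printing Implicit Defensive.
Import Order.TTheory GRing.Theory Num.Theory.
Local Open Scope ring_scope.

Definition GramT (R : realFieldType) (n p : nat) (GA GC : 'M[R]_p) : 'M[R]_p :=
  (n%:R)^-1 *: (GA + (n.-1)%:R *: GC).

Definition GramD (R : realFieldType) (n p : nat) (GA GC : 'M[R]_p) : 'M[R]_p :=
  GA - GramT n GA GC.

(* Main.v *)
Require Import Defs.
From HB Require Import structures.
From mathcomp Require Import all_boot all_order all_algebra.
From mathcomp Require Import ring.
Import Order.TTheory GRing.Theory Num.Theory.
Local Open Scope ring_scope.

Lemma normsq0 (R : realFieldType) (d : nat) (v : 'cV[R]_d) :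
  v^T *m v = 0 -> v = 0.
Proof.
move=> H; have := congr1 (fun M : 'M_1 => M 0 0) H; rewrite !mxE /= => Hs.
apply/matrixP => k j; rewrite (ord1 j) mxE.
have Hp : forall i, predT i -> 0 <= v^T 0 i * v i 0.
  by move=> i _; rewrite mxE -expr2 sqr_ge0.
have := @psumr_eq0P R _ predT (fun k => v^T 0 k * v k 0) Hp Hs k isT.
rewrite /= mxE -expr2 => /eqP; rewrite sqrf_eq0 => /eqP //.
Qed.

Theorem proposition10 (R : realFieldType) (n d p : nat)
    (P : 'I_n -> 'M[R]_(d, p)) (GA GC : 'M[R]_p) (xi_g xi_x : 'cV[R]_p) :
  (2 <= n)%N ->
  (forall i : 'I_n, (P i)^T *m P i = GA) ->
  (forall i j : 'I_n, i != j -> (P i)^T *m P j = GC) ->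
  let g := fun i : 'I_n => P i *m xi_g in
  let x := fun i : 'I_n => P i *m xi_x in
  ((n%:R)^-1 *: (\sum_(i < n) g i) = 0 /\ (forall i j : 'I_n, x i = x j))
  <->
  (xi_g^T *m GramT n GA GC *m xi_g = 0 /\ xi_x^T *m GramD n GA GC *m xi_x = 0).
Proof.
move=> n2 HA HC g x.
have N0 : (n%:R : R) != 0 by rewrite pnatr_eq0 -lt0n; apply: leq_trans n2.
have NS : (n%:R : R) = (n.-1)%:R + 1.
  by rewrite natr1 prednK //; apply: leq_trans n2.
have M0 : ((n.-1)%:R : R) != 0 by rewrite pnatr_eq0 -lt0n -ltnS prednK //; apply: leq_trans n2.
have Hsum : (\sum_i P i)^T *m (\sum_i P i) = (n%:R ^+ 2) *: GramT n GA GC.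
  rewrite /GramT scalerA expr2 -mulrA mulfV // mulr1.
  rewrite [(\sum_i P i)^T]linear_sum mulmx_suml.
  rewrite (eq_bigr (fun _ => GA + (n.-1)%:R *: GC)); last first.
    move=> i _; rewrite mulmx_sumr (bigD1 i) //= HA; congr (_ + _).
    rewrite (eq_bigr (fun _ => GC)); last by move=> j Hj; rewrite HC // eq_sym.
    by rewrite sumr_const cardC1 card_ord scaler_nat.
  by rewrite sumr_const card_ord -scaler_nat.
have Sg : \sum_i g i = (\sum_i P i) *m xi_g by rewrite mulmx_suml.
have Hg : (\sum_i g i)^T *m (\sum_i g i)
          = (n%:R ^+ 2) *: (xi_g^T *m GramT n GA GC *m xi_g).
  by rewrite Sg trmx_mul !mulmxA -(mulmxA xi_g^T (\sum_i P i)^T) Hsum -scalemxAr -scalemxAl.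
have GDE : GramD n GA GC = ((n.-1)%:R / n%:R) *: (GA - GC).
  rewrite /GramD /GramT; apply/matrixP => a b; rewrite !mxE NS /=.
  by field; rewrite -NS.
have Hx : forall i j, i != j -> (x i - x j)^T *m (x i - x j)
    = (2 * n%:R / (n.-1)%:R) *: (xi_x^T *m GramD n GA GC *m xi_x).
  move=> i j ij.
  have DD : (P i - P j)^T *m (P i - P j) = 2%:R *: (GA - GC).
    rewrite [(P i - P j)^T]linearB /= mulmxBl !mulmxBr !HA HC // HC 1?eq_sym //.
    by rewrite scaler_nat mulr2n; apply/matrixP => a b; rewrite !mxE; ring.
  rewrite /x -!mulmxBl trmx_mul [LHS]mulmxA -(mulmxA xi_x^T (P i - P j)^T) DD GDE.
  rewrite -!scalemxAr -!scalemxAl scalerA; congr (_ *: _).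
  by field; rewrite M0 N0.
split.
- move=> [H1 H2]; split.
  + have S0 : \sum_i g i = 0.
      by move/eqP: H1; rewrite scaler_eq0 invr_eq0 (negbTE N0) /= => /eqP.
    have := Hg; rewrite S0 trmx0 mul0mx => /esym/eqP.
    by rewrite scaler_eq0 expf_eq0 (negbTE N0) andbF /= => /eqP.
  + have ij : (@Ordinal n 0 (ltnW n2)) != (@Ordinal n 1 n2) by [].
    have := Hx _ _ ij; rewrite (H2 (Ordinal (ltnW n2)) (Ordinal n2)) subrr trmx0 mul0mx => /esym/eqP.
    rewrite scaler_eq0 => /orP [|/eqP //].
    by rewrite !mulf_eq0 invr_eq0 (negbTE N0) (negbTE M0) pnatr_eq0.
- move=> [H1 H2]; split.
  + by apply/eqP; rewrite scaler_eq0; apply/orP; right; apply/eqP/normsq0;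
      rewrite Hg H1 scaler0.
  + move=> i j; case: (eqVneq i j) => [-> //|ij].
    by apply/eqP; rewrite -subr_eq0; apply/eqP/normsq0; rewrite Hx // H2 scaler0.
Qed.
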